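(* Let $\sigma^2>0$, let $\phi^m:\mathbb{R}^d\to\mathbb{R}^m$ and $\phi^r:\mathbb{R}^d\to\mathbb{R}^r$ be feature maps, let $\mathbf{x}_1,\ldots,\mathbf{x}_N\in\mathbb{R}^d$ be training points with $N\ge r$ such that $\Phi^{r\top}_{\mathbf{x}}\Phi^r_{\mathbf{x}}$ is invertible, and let $\mathbf{x}'_1,\ldots,\mathbf{x}'_{N'}\in\mathbb{R}^d$ be test points. Here $\Phi^r_{\mathbf{u}}$ (resp. $\Phi^m_{\mathbf{u}}$) denotes the matrix whose $i$-th row is $\phi^r(\mathbf{u}_i)^\top$ (resp. $\phi^m(\mathbf{u}_i)^\top$). Let $A:=\Phi^{m\top}_{\mathbf{x}}\Phi^r_{\mathbf{x}}(\Phi^{r\top}_{\mathbf{x}}\Phi^r_{\mathbf{x}})^{-1}\in\mathbb{R}^{m\times r}$ (the minimizer of $\sum_{i=1}^N\|\phi^m(\mathbf{x}_i)-A\phi^r(\mathbf{x}_i)\|_2^2$), let $B:=\begin{pmatrix}A\\ I_r\end{pmatrix}\in\mathbb{R}^{(m+r)\times r}$ and $\phi^B(x):=B\phi^r(x)$. Define $k^B_{\mathbf{u},\mathbf{v}}:=\Phi^r_{\mathbf{u}}B^\top B\Phi^{r\top}_{\mathbf{v}}$, $k^r_{\mathbf{u},\mathbf{v}}:=\Phi^r_{\mathbf{u}}\Phi^{r\top}_{\mathbf{v}}$, and $$S^B_{\mathbf{x}',\mathbf{x}'}:=k^B_{\mathbf{x}',\mathbf{x}'}-k^B_{\mathbf{x}',\mathbf{x}}(k^B_{\mathbf{x},\mathbf{x}}+\sigma^2I_N)^{-1}k^B_{\mathbf{x},\mathbf{x}'},\qquad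 S^{\mathrm{BLL}}_{\mathbf{x}',\mathbf{x}'}:=k^r_{\mathbf{x}',\mathbf{x}'}-k^r_{\mathbf{x}',\mathbf{x}}(k^r_{\mathbf{x},\mathbf{x}}+\sigma^2I_N)^{-1}k^r_{\mathbf{x},\mathbf{x}'}.$$ Then $S^B_{\mathbf{x}',\mathbf{x}'}\succeq S^{\mathrm{BLL}}_{\mathbf{x}',\mathbf{x}'}$ in the Loewner (positive semidefinite) order. The same holds when $\phi^B$ is replaced by the equivalent features $\phi^L(x):=L^\top\phi^r(x)$, where $LL^\top=B^\top B$ is the Cholesky decomposition.
   Context: In the motivating application, $\phi^r$ are the last-layer (Bayesian last layer) features of a trained network and $\phi^m$ are the gradients of the network output with respect to all non-last-layer parameters; $S^{\mathrm{BLL}}$ is the predictive covariance of a standard Bayesian last layer and $S^B$ that of the approximate NTK features. *)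

(* Defs.v *)
From HB Require Import structures.
From mathcomp Require Import all_boot all_order all_algebra.
Set Implicit Arguments. Unset Strict Implicit. Unset Printing Implicit Defensive.
Import Order.TTheory GRing.Theory Num.Theory.
Local Open Scope ring_scope.

(* Feature maps are represented in row form: phi x = phi(x)^T : 'rV_k. *)

Definition featmx (R : pzRingType) (d k n : nat)
  (phi : 'rV[R]_d -> 'rV[R]_k) (u : 'I_n -> 'rV[R]_d) : 'M[R]_(n, k) :=
  \matrix_(i < n) phi (u i).

Definition lsqA (R : fieldType) (d m r N : nat)
  (phim : 'rV[R]_d -> 'rV[R]_m) (phir : 'rV[R]_d -> 'rV[R]_r)
  (x : 'I_N -> 'rV[R]_d) : 'M[R]_(m, r) :=
  (featmx phim x)^T *m featmx phir x *m invmx ((featmx phir x)^T *m featmx phir x).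

Definition Bmx (R : fieldType) (d m r N : nat)
  (phim : 'rV[R]_d -> 'rV[R]_m) (phir : 'rV[R]_d -> 'rV[R]_r)
  (x : 'I_N -> 'rV[R]_d) : 'M[R]_(m + r, r) :=
  col_mx (lsqA phim phir x) 1%:M.

(* Linear transform of features: psi(x) := M phi(x), in row form phi(x)^T M^T. *)
Definition lin_feat (R : pzRingType) (d r p : nat) (M : 'M[R]_(p, r))
  (phi : 'rV[R]_d -> 'rV[R]_r) : 'rV[R]_d -> 'rV[R]_p :=
  fun z => phi z *m M^T.

Definition kmx (R : pzRingType) (d k n n' : nat) (phi : 'rV[R]_d -> 'rV[R]_k)
  (u : 'I_n -> 'rV[R]_d) (v : 'I_n' -> 'rV[R]_d) : 'M[R]_(n, n') :=
  featmx phi u *m (featmx phi v)^T.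

Definition postcov (R : fieldType) (d k N N' : nat) (phi : 'rV[R]_d -> 'rV[R]_k)
  (sigma2 : R) (x : 'I_N -> 'rV[R]_d) (x' : 'I_N' -> 'rV[R]_d) : 'M[R]_N' :=
  kmx phi x' x' - kmx phi x' x *m invmx (kmx phi x x + sigma2%:M) *m kmx phi x x'.

Definition psdmx (R : numDomainType) (n : nat) (M : 'M[R]_n) : Prop :=
  forall v : 'cV[R]_n, 0 <= (v^T *m M *m v) 0 0.

Definition loewner_ge (R : numDomainType) (n : nat) (S T : 'M[R]_n) : Prop :=
  psdmx (S - T).

Definition is_cholesky (R : numDomainType) (n : nat) (L M : 'M[R]_n) : Prop :=
  [/\ forall i j : 'I_n, (i < j)%N -> L i j = 0,
      forall i : 'I_n, 0 < L i i
    & L *m L^T = M].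

(* Main.v *)
Require Import Defs.
From HB Require Import structures.
From mathcomp Require Import all_boot all_order all_algebra.
From mathcomp Require Import ring lra.
Import Order.TTheory GRing.Theory Num.Theory.
Local Open Scope ring_scope.

Section Aux.
Variable R : realFieldType.

Lemma tr11 (M : 'M[R]_1) : M^T = M.
Proof. by apply/matrixP=> i j; rewrite !ord1 mxE. Qed.

Lemma sq_ge0 n (u : 'cV[R]_n) : 0 <= (u^T *m u) 0 0.
Proof. rewrite mxE; apply: sumr_ge0 => i _; rewrite mxE -expr2; exact: sqr_ge0. Qed.

Lemma sq_eq0 n (u : 'cV[R]_n) : (u^T *m u) 0 0 = 0 -> u = 0.
Proof.
rewrite mxE => /psumr_eq0P H.
have H0 : forall i, true -> 0 <= u^T 0 i * u i 0.
  by move=> k _; rewrite mxE -expr2 sqr_ge0.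
apply/matrixP => i j; rewrite ord1 [RHS]mxE.
have := H H0 i isT.
rewrite mxE; move/eqP; rewrite mulf_eq0 orbb; exact/eqP.
Qed.

Lemma featmx_lin d p k n (M : 'M[R]_(p,k)) (phi : 'rV[R]_d -> 'rV[R]_k)
   (u : 'I_n -> 'rV[R]_d) : featmx (lin_feat M phi) u = featmx phi u *m M^T.
Proof.
apply/matrixP => i j; rewrite /featmx /lin_feat mxE mxE [RHS]mxE.
by apply: eq_bigr => l _; rewrite !mxE.
Qed.

Variables (r N N' : nat) (Phi : 'M[R]_(N, r)) (Phi' : 'M[R]_(N', r)) (s : R).

Definition PC (G : 'M[R]_r) : 'M[R]_N' :=
  Phi' *m G *m Phi'^T - Phi' *m G *m Phi^T *m invmx (Phi *m G *m Phi^T + s%:M) *m Phi *m G *m Phi'^T.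

Lemma postcov_lin d p (M : 'M[R]_(p,r)) (phi : 'rV[R]_d -> 'rV[R]_r) x x' :
  featmx phi x = Phi -> featmx phi x' = Phi' ->
  postcov (lin_feat M phi) s x x' = PC (M^T *m M).
Proof.
move=> hx hx'; rewrite /postcov /kmx !featmx_lin hx hx' /PC !trmx_mul !trmxK !mulmxA.
reflexivity.
Qed.

Lemma postcov_id d (phi : 'rV[R]_d -> 'rV[R]_r) x x' :
  featmx phi x = Phi -> featmx phi x' = Phi' ->
  postcov phi s x x' = PC 1%:M.
Proof. by move=> hx hx'; rewrite /postcov /kmx /PC -hx -hx' !mulmx1 !mulmxA. Qed.


Definition Kmx (G : 'M[R]_r) : 'M[R]_N := Phi *m G *m Phi^T + s%:M.
Definition Q (G : 'M[R]_r) (a : 'cV[R]_r) : 'M[R]_1 :=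
  a^T *m G *m a - a^T *m G *m Phi^T *m invmx (Kmx G) *m Phi *m G *m a.
Definition F (G : 'M[R]_r) (a : 'cV[R]_r) (w : 'cV[R]_N) : 'M[R]_1 :=
  (a - Phi^T *m w)^T *m G *m (a - Phi^T *m w) + s *: (w^T *m w).

Lemma quad_K G (v : 'cV[R]_N) :
  v^T *m Kmx G *m v = (Phi^T *m v)^T *m G *m (Phi^T *m v) + s *: (v^T *m v).
Proof.
rewrite /Kmx mulmxDr mulmxDl mul_mx_scalar -scalemxAl trmx_mul trmxK !mulmxA.
by [].
Qed.

Lemma Kunit G : (forall b : 'cV[R]_r, 0 <= (b^T *m G *m b) 0 0) -> 0 < s ->
  Kmx G \in unitmx.
Proof.
move=> hG hs; rewrite unitmxE unitfE; apply/negP => /det0P [v vnz vK].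
have : ((v^T)^T *m Kmx G *m v^T) 0 0 = 0 by rewrite trmxK vK mul0mx mxE.
rewrite quad_K mxE [X in _ + X = _]mxE.
have hX := hG (Phi^T *m v^T); have hY := sq_ge0 _ v^T.
move: hX hY.
set X := (_ *m G *m _) 0 0; set Y := ((v^T)^T *m v^T) 0 0 => hX hY hXY.
have Y0 : Y = 0 by apply/le_anti; rewrite hY andbT; nra.
move: vnz; rewrite -[v]trmxK (sq_eq0 _ v^T Y0).
by rewrite trmx0 eqxx.
Qed.

Lemma Fid G a w : G^T = G -> Kmx G \in unitmx ->
  F G a w = Q G a + (w - invmx (Kmx G) *m (Phi *m G *m a))^T *m Kmx G
                      *m (w - invmx (Kmx G) *m (Phi *m G *m a)).
Proof.
move=> hG hK.
set c := Phi *m G *m a; set ws := invmx (Kmx G) *m c; set K := Kmx G.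
have hKt : K^T = K by rewrite /K /Kmx linearD /= tr_scalar_mx !trmx_mul trmxK hG mulmxA.
have hKws : K *m ws = c by rewrite /ws mulmxA mulmxV // mul1mx.
set T1 := a^T *m G *m a; set T2 := w^T *m c; set T4 := c^T *m ws.
set Y := (Phi^T *m w)^T *m G *m (Phi^T *m w); set Z := w^T *m w.
have hq : Q G a = T1 - T4 by rewrite /Q /T4 /ws /c !trmx_mul hG !mulmxA.
have e2 : a^T *m G *m (Phi^T *m w) = T2.
  by rewrite -[RHS]tr11 /T2 /c !trmx_mul trmxK hG !mulmxA.
have e2' : (Phi^T *m w)^T *m G *m a = T2 by rewrite /T2 /c trmx_mul trmxK !mulmxA.
have hf : F G a w = T1 - T2 - (T2 - Y) + s *: Z.
  by rewrite /F mulmxBr [(_ - _)^T]linearB /= !mulmxDl !mulNmx e2 e2'.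
have hD : (w - ws)^T *m K *m (w - ws) = Y + s *: Z - T2 - (T2 - T4).
  rewrite [(_ - _)^T]linearB /= !mulmxDl !mulNmx !mulmxBr -quad_K.
  rewrite -[w^T *m K *m ws]mulmxA hKws.
  rewrite -[ws^T *m K *m ws]mulmxA hKws -[ws^T *m c]tr11 (trmx_mul ws^T c) trmxK.
  have e3 : ws^T *m K *m w = T2 by rewrite -[LHS]tr11 (trmx_mul (ws^T *m K) w) (trmx_mul ws^T K) trmxK hKt hKws.
  by rewrite e3.
rewrite hf hq hD.
clearbody T1 T2 T4 Y Z.
by apply/matrixP => i j; rewrite !mxE; ring.
Qed.


Lemma e_add (A B : 'M[R]_1) : (A + B) 0 0 = A 0 0 + B 0 0.
Proof. by rewrite mxE. Qed.
Lemma e_sub (A B : 'M[R]_1) : (A - B) 0 0 = A 0 0 - B 0 0.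
Proof. by rewrite !mxE. Qed.
Lemma e_scale (c : R) (A : 'M[R]_1) : (c *: A) 0 0 = c * A 0 0.
Proof. by rewrite mxE. Qed.

Lemma mainQ G a : G^T = G ->
  (forall b : 'cV[R]_r, 0 <= (b^T *m (G - 1%:M) *m b) 0 0) -> 0 < s ->
  (Q 1%:M a) 0 0 <= (Q G a) 0 0.
Proof.
move=> hG hG1 hs.
have hGb : forall b : 'cV[R]_r,
    (b^T *m G *m b) 0 0 = (b^T *m (G - 1%:M) *m b) 0 0 + (b^T *m b) 0 0.
  move=> b; rewrite mulmxBr mulmxBl mulmx1 e_sub; ring.
have hGp : forall b : 'cV[R]_r, 0 <= (b^T *m G *m b) 0 0.
  by move=> b; rewrite hGb; apply: addr_ge0 => //; apply: sq_ge0.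
have h1p : forall b : 'cV[R]_r, 0 <= (b^T *m 1%:M *m b) 0 0.
  by move=> b; rewrite mulmx1; apply: sq_ge0.
have uG := Kunit G hGp hs.
have u1 := Kunit 1%:M h1p hs.
set ws := invmx (Kmx G) *m (Phi *m G *m a).
have E1 : Q G a = F G a ws.
  by rewrite (Fid G a ws hG uG) -/ws subrr trmx0 !mul0mx addr0.
have E2 := Fid 1%:M a ws (trmx1 _ _) u1.
have E3 : (F 1%:M a ws) 0 0 <= (F G a ws) 0 0.
  rewrite /F !e_add hGb mulmx1; have := hG1 (a - Phi^T *m ws); lra.
move: E2; set d := (ws - _); rewrite quad_K => E2.
move: E3; rewrite E2 -E1.
set q1 := Q 1%:M a; set qG := Q G a; clearbody q1 qG.
rewrite !e_add e_scale mulmx1.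
have := sq_ge0 _ d; have := sq_ge0 _ (Phi^T *m d); nra.
Qed.

Lemma loew G : G^T = G ->
  (forall b : 'cV[R]_r, 0 <= (b^T *m (G - 1%:M) *m b) 0 0) -> 0 < s ->
  loewner_ge (PC G) (PC 1%:M).
Proof.
move=> hG hG1 hs v.
have -> : v^T *m (PC G - PC 1%:M) *m v = Q G (Phi'^T *m v) - Q 1%:M (Phi'^T *m v).
  rewrite /PC /Q ?mulmxBr ?mulmxDl ?mulNmx ?mulmxBr ?mulmxDl ?mulNmx ?trmx_mul ?trmxK ?mulmxA.
  reflexivity.
rewrite e_sub subr_ge0; exact: mainQ.
Qed.
End Aux.


Theorem theorem3p3 (R : realFieldType) (d m r N N' : nat) (sigma2 : R)
  (phim : 'rV[R]_d -> 'rV[R]_m) (phir : 'rV[R]_d -> 'rV[R]_r)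
  (x : 'I_N -> 'rV[R]_d) (x' : 'I_N' -> 'rV[R]_d) :
  0 < sigma2 ->
  (r <= N)%N ->
  (featmx phir x)^T *m featmx phir x \in unitmx ->
  loewner_ge (postcov (lin_feat (Bmx phim phir x) phir) sigma2 x x')
             (postcov phir sigma2 x x')
  /\ (forall L : 'M[R]_r,
        is_cholesky L ((Bmx phim phir x)^T *m Bmx phim phir x) ->
        loewner_ge (postcov (lin_feat L^T phir) sigma2 x x')
                   (postcov phir sigma2 x x')).
Proof.
move=> hs _ _.
set Phi := featmx phir x; set Phi' := featmx phir x'.
set A := lsqA phim phir x.
set BB := (Bmx phim phir x)^T *m Bmx phim phir x.
have hBB : BB = A^T *m A + 1%:M by rewrite /BB /Bmx tr_col_mx mul_row_col trmx1 mulmx1.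
have key : loewner_ge (PC R r N N' Phi Phi' sigma2 BB) (PC R r N N' Phi Phi' sigma2 1%:M).
  apply: loew => //.
    by rewrite /BB trmx_mul trmxK.
  move=> b; rewrite hBB addrK.
  have -> : b^T *m (A^T *m A) *m b = (A *m b)^T *m (A *m b) by rewrite (trmx_mul A b) !mulmxA.
  exact: sq_ge0.
have hid := @postcov_id R r N N' Phi Phi' sigma2 d phir x x' erefl erefl.
split.
  by rewrite (@postcov_lin R r N N' Phi Phi' sigma2 d _ _ phir x x' erefl erefl) hid.
move=> L [_ _ hL].
rewrite (@postcov_lin R r N N' Phi Phi' sigma2 d _ _ phir x x' erefl erefl) hid.
by rewrite trmxK hL.
Qed.
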